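(* Let $K\ge3$ and let all arms share the same exponential family with log-partition function $\mathcal{A}$ on an open convex $\Psi\subset\mathbb{R}^d$ (minimal representation, $\mathcal{A}$ strictly convex and $C^2$ with positive definite Hessian, conjugate $\mathcal{F}$ strictly convex and $C^2$). Let $\boldsymbol{\theta}\ne\boldsymbol{\theta}'\in\Psi$ with expectation parameters $\boldsymbol{\kappa}=\nabla\mathcal{A}(\boldsymbol{\theta})$, $\boldsymbol{\kappa}'=\nabla\mathcal{A}(\boldsymbol{\theta}')$. Put $c=\frac{K-2}{K-1}$ and, for $\lambda\in[0,1]$, $$\tilde{\boldsymbol{\kappa}}(\lambda)=\frac{\lambda\boldsymbol{\kappa}+(1-\lambda)c\,\boldsymbol{\kappa}'}{\lambda+(1-\lambda)c},\qquad\tilde{\boldsymbol{\eta}}(\lambda)=\nabla\mathcal{F}(\tilde{\boldsymbol{\kappa}}(\lambda)),$$ $$\Phi(\lambda)=\lambda D(\boldsymbol{\theta}\|\tilde{\boldsymbol{\eta}}(\lambda))+(1-\lambda)c\,D(\boldsymbol{\theta}'\|\tilde{\boldsymbol{\eta}}(\lambda)).$$ Then $\Phi$ is twice differentiable on $(0,1)$ with $\Phi''(\lambda)<0$ there; in particular $\Phi$ is strictly concave on $[0,1]$.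
   Context: $D(\boldsymbol{\eta}\|\boldsymbol{\eta}')=(\boldsymbol{\eta}-\boldsymbol{\eta}')^T\nabla\mathcal{A}(\boldsymbol{\eta})-\mathcal{A}(\boldsymbol{\eta})+\mathcal{A}(\boldsymbol{\eta}')$ is the Kullback–Leibler divergence between the family members with natural parameters $\boldsymbol{\eta}$ and $\boldsymbol{\eta}'$; $\nabla\mathcal{F}$ is the inverse of $\nabla\mathcal{A}$, and $\tilde{\boldsymbol{\kappa}}(\lambda)$ is assumed to lie in the domain where $\nabla\mathcal{F}$ maps into $\Psi$. (In the odd-arm problem, hypothesis $l$ is $\Theta_l=\{\overline{\boldsymbol{\eta}}:\boldsymbol{\eta}_l=\boldsymbol{\theta},\ \boldsymbol{\eta}_j=\boldsymbol{\theta}'\ \forall j\ne l,\ \boldsymbol{\theta}\ne\boldsymbol{\theta}'\}$, and $\Phi(\lambda)$ is the reduced objective obtained when weight $\lambda$ is put on the odd arm and weight $(1-\lambda)/(K-1)$ on each other arm.) *)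

(* Defs.v *)
From HB Require Import structures.
From mathcomp Require Import all_boot all_order all_algebra.
From mathcomp Require Import all_classical all_reals all_analysis.
Set Implicit Arguments. Unset Strict Implicit. Unset Printing Implicit Defensive.
Import Order.TTheory GRing.Theory Num.Theory.
Import numFieldNormedType.Exports.
Local Open Scope classical_set_scope.
Local Open Scope ring_scope.

Definition dotv (R : realType) (d : nat) (u v : 'rV[R]_d) : R := (u *m v^T) 0 0.

Definition convex_setv (R : realType) (d : nat) (S : set 'rV[R]_d) : Prop :=
  forall x y, S x -> S y -> forall t : R, 0 <= t <= 1 ->
    S (t *: x + (1 - t) *: y).

Definition strictly_convex_on (R : realType) (d : nat) (S : set 'rV[R]_d)
  (f : 'rV[R]_d -> R) : Prop :=
  forall x y, S x -> S y -> x != y -> forall t : R, 0 < t < 1 ->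
    f (t *: x + (1 - t) *: y) < t * f x + (1 - t) * f y.

Definition strictly_concave_on (R : realType) (S : set R) (f : R -> R) : Prop :=
  forall x y, S x -> S y -> x != y -> forall t : R, 0 < t < 1 ->
    t * f x + (1 - t) * f y < f (t * x + (1 - t) * y).

(* KL divergence via the Bregman form:
   D(eta || eta') = (eta - eta')^T gradA(eta) - A(eta) + A(eta'). *)
Definition KLdiv (R : realType) (d : nat) (A : 'rV[R]_d -> R)
  (gA : 'rV[R]_d -> 'rV[R]_d) (eta eta' : 'rV[R]_d) : R :=
  dotv (eta - eta') (gA eta) - A eta + A eta'.

Definition cK (R : realType) (K : nat) : R := (K - 2)%:R / (K - 1)%:R.

Definition kappa_tilde (R : realType) (d : nat) (K : nat) (kap kap' : 'rV[R]_d)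
  (l : R) : 'rV[R]_d :=
  (l + (1 - l) * cK R K)^-1 *: (l *: kap + ((1 - l) * cK R K) *: kap').

Definition Phi (R : realType) (d : nat) (K : nat) (A : 'rV[R]_d -> R)
  (gA gF : 'rV[R]_d -> 'rV[R]_d) (th th' : 'rV[R]_d) (l : R) : R :=
  let eta := gF (kappa_tilde K (gA th) (gA th') l) in
  l * KLdiv A gA th eta + (1 - l) * cK R K * KLdiv A gA th' eta.

(* Main.v *)
Require Import Defs.
From HB Require Import structures.
From mathcomp Require Import all_boot all_order all_algebra.
From mathcomp Require Import all_classical all_reals all_analysis.
From mathcomp Require Import ring lra.
Import Order.TTheory GRing.Theory Num.Theory.
Import numFieldNormedType.Exports.
Local Open Scope classical_set_scope.
Local Open Scope ring_scope.
Set Implicit Arguments. Unset Strict Implicit. Unset Printing Implicit Defensive.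

Lemma is_derive_ext (R : realType) (V W : normedModType R) (f g : V -> W) x v df :
  f =1 g -> is_derive x v f df -> is_derive x v g df.
Proof. by move=> /funext ->. Qed.

Lemma is_derive_aff (R : realType) (p0 p1 l : R) :
  is_derive l (1:R) (fun x : R => p0 + p1 * x) p1.
Proof.
have h := is_deriveD (is_derive_cst p0 l 1) (is_deriveZ p1 (is_derive_id l (1:R))).
have e : p1 = 0 + p1%:A by rewrite add0r /GRing.scale /= mulr1.
rewrite [X in is_derive _ _ _ X]e.
move: h; apply: is_derive_ext => x /=. by [].
Qed.

Lemma is_derive_quot (R : realType) (p0 p1 q0 q1 l : R) : q0 + q1 * l != 0 ->
  is_derive l (1:R) (fun x : R => (p0 + p1 * x) / (q0 + q1 * x))
    ((p1 * (q0 + q1 * l) - (p0 + p1 * l) * q1) / (q0 + q1 * l) ^+ 2).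
Proof.
move=> hq.
have hp := is_derive_aff p0 p1 l.
have hq' := is_derive_aff q0 q1 l.
have hv : is_derive l (1:R) (fun x : R => (q0 + q1 * x)^-1) (- (q0 + q1 * l) ^- 2 *: q1).
  apply: DeriveDef; first by apply: derivableV => //; exact: ex_derive.
  by rewrite deriveV // derive_val.
have h := is_deriveM hp hv.
have e : ((p1 * (q0 + q1 * l) - (p0 + p1 * l) * q1) / (q0 + q1 * l) ^+ 2) =
   (p0 + p1 * l) *: (- (q0 + q1 * l) ^- 2 *: q1) + (q0 + q1 * l)^-1 *: p1.
  rewrite /GRing.scale /=. field. done.
rewrite e; move: h; apply: is_derive_ext => x /=. by [].
Qed.

Lemma is_derive_diff (R : realType) (V W : normedModType R) (f : V -> W) x v :
  differentiable f x -> is_derive x v f ('d f x v).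
Proof. by move=> df; apply: DeriveDef; [exact: diff_derivable | exact: deriveE]. Qed.

Section Dot.
Variables (R : realType) (d : nat).
Implicit Types u v w : 'rV[R]_d.
Lemma dotvC u v : dotv u v = dotv v u.
Proof. by rewrite /dotv -[in RHS](trmxK (v *m u^T)) trmx_mul trmxK [RHS]mxE. Qed.
Lemma dotvDl u v w : dotv (u + v) w = dotv u w + dotv v w.
Proof. by rewrite /dotv mulmxDl mxE. Qed.
Lemma dotvZl k u v : dotv (k *: u) v = k * dotv u v.
Proof. by rewrite /dotv -scalemxAl mxE. Qed.
Lemma dotvNl u v : dotv (- u) v = - dotv u v.
Proof. by rewrite -scaleN1r dotvZl mulN1r. Qed.
Lemma dotvBl u v w : dotv (u - v) w = dotv u w - dotv v w.
Proof. by rewrite dotvDl dotvNl. Qed.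
Lemma dotvZr k u v : dotv u (k *: v) = k * dotv u v.
Proof. by rewrite dotvC dotvZl dotvC. Qed.
End Dot.

Lemma is_derive_comp_diff (R : realType) (U W : normedModType R) (f : R -> U) (g : U -> W) x :
  differentiable f x -> differentiable g (f x) ->
  is_derive x (1:R) (g \o f) ('d g (f x) ('d f x 1)).
Proof.
move=> df dg.
have h := @is_derive_diff _ _ _ (g \o f) x 1 (differentiable_comp df dg).
have e := diff_comp df dg.
rewrite e in h.
exact: h.
Qed.

Section Main.
Variables (R : realType) (d K : nat) (Psi : set 'rV[R]_d)
  (A : 'rV[R]_d -> R) (gA gF : 'rV[R]_d -> 'rV[R]_d) (th th' : 'rV[R]_d).
Hypothesis hK : (3 <= K)%N.
Hypothesis hA : forall x, Psi x -> differentiable A x /\ forall v, 'd A x v = dotv (gA x) v.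
Hypothesis hgA : forall x, Psi x -> differentiable gA x.
Hypothesis hpos : forall x v, Psi x -> v != 0 -> 0 < dotv v ('d gA x v).
Hypothesis hinv1 : forall x, Psi x -> gF (gA x) = x.
Hypothesis hinv2 : forall k, (gA @` Psi) k -> Psi (gF k) /\ gA (gF k) = k.
Hypothesis hgF : forall k, (gA @` Psi) k -> differentiable gF k.
Hypothesis hth : Psi th.
Hypothesis hth' : Psi th'.
Hypothesis hne : th != th'.
Hypothesis hkt : forall l : R, 0 <= l <= 1 -> (gA @` Psi) (kappa_tilde K (gA th) (gA th') l).

Let a := gA th.
Let b := gA th'.
Let c := cK R K.
Let s (l : R) := l + (1 - l) * c.
Let tt (l : R) := l / s l.
Let uu (l : R) := (1 - l) * c / s l.
Let kt := kappa_tilde K a b.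
Let eta (l : R) := gF (kt l).

Lemma c_bounds : 0 < c < 1.
Proof.
rewrite /c /cK.
have e : (K - 1)%N = (K - 2)%N.+1 by rewrite -subSn ?subSS //; apply: leq_trans hK.
have p0 : (0 : R) < (K - 2)%:R by rewrite ltr0n subn_gt0 (leq_trans _ hK).
rewrite e -[(K - 2).+1]addn1 natrD.
have p1 : (0 : R) < (K - 2)%:R + 1%:R by rewrite addr_gt0.
by rewrite divr_gt0 //= ltr_pdivrMr // mul1r ltrDl ltr01.
Qed.

Lemma s_pos l : 0 <= l <= 1 -> 0 < s l.
Proof.
move=> /andP[l0 l1]; have /andP[c0 c1] := c_bounds.
rewrite /s; nra.
Qed.

Lemma a_neq_b : a - b != 0.
Proof.
rewrite subr_eq0; apply/negP => /eqP e.
by move: hne; rewrite -(hinv1 hth) -(hinv1 hth') -/a -/b e eqxx.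
Qed.

Lemma ktE l : kt l = tt l *: a + uu l *: b.
Proof. by apply/rowP => j; rewrite /kt /kappa_tilde /tt /uu /s -/c !mxE; ring. Qed.

Lemma is_derive_tt l : s l != 0 -> is_derive l (1:R) tt (c / s l ^+ 2).
Proof.
move=> hs.
have e : forall x, s x = c + (1 - c) * x by move=> x; rewrite /s; ring.
have hq : c + (1 - c) * l != 0 by rewrite -e.
have := is_derive_quot 0 1 hq.
have -> : ((1 * (c + (1 - c) * l) - (0 + 1 * l) * (1 - c)) / (c + (1 - c) * l) ^+ 2)
   = c / s l ^+ 2 by rewrite e; congr (_ / _); ring.
apply: is_derive_ext => x; rewrite /tt e; congr (_ / _); ring.
Qed.

Lemma is_derive_uu l : s l != 0 -> is_derive l (1:R) uu (- (c / s l ^+ 2)).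
Proof.
move=> hs.
have e : forall x, s x = c + (1 - c) * x by move=> x; rewrite /s; ring.
have hq : c + (1 - c) * l != 0 by rewrite -e.
have := is_derive_quot c (- c) hq.
have -> : ((- c * (c + (1 - c) * l) - (c + - c * l) * (1 - c)) / (c + (1 - c) * l) ^+ 2)
   = - (c / s l ^+ 2) by rewrite e -[RHS]mulNr; congr (_ * _); ring.
apply: is_derive_ext => x; rewrite /uu e; congr (_ / _); ring.
Qed.

Lemma dkt l : s l != 0 ->
  derivable kt l 1 /\ 'D_1 kt l = (c / s l ^+ 2) *: (a - b).
Proof.
move=> hs.
have dt := is_derive_tt hs; have du := is_derive_uu hs.
have hij : forall i j, is_derive l (1:R) (fun x : R => kt x i j) ((c / s l ^+ 2) * (a i j - b i j)).
  move=> i j.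
  have h := is_deriveD (is_deriveM dt (is_derive_cst (a i j) l 1))
                       (is_deriveM du (is_derive_cst (b i j) l 1)).
  have e : (c / s l ^+ 2) * (a i j - b i j) =
    (tt l *: 0 + a i j *: (c / s l ^+ 2)) + (uu l *: 0 + b i j *: - (c / s l ^+ 2)).
    rewrite /GRing.scale /=; ring.
  rewrite e; move: h; apply: is_derive_ext => x /=.
  by rewrite ktE !mxE.
have dk : derivable kt l 1 by apply/derivable_mxP => i j; exact: ex_derive.
split => //.
rewrite derive_mx //; apply/matrixP => i j; rewrite !mxE.
by rewrite (derive_val (is_derive := hij i j)).
Qed.

Let w (l : R) := 'd gF (kt l) (a - b).

Lemma eta_props l : 0 <= l <= 1 ->
  [/\ Psi (eta l), gA (eta l) = kt l, differentiable eta l &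
      'd eta l 1 = (c / s l ^+ 2) *: w l].
Proof.
move=> hl.
have hs : s l != 0 by rewrite gt_eqF // s_pos.
have [dk Dk] := dkt hs.
have dkd : differentiable kt l by apply/derivable1_diffP.
have hk : (gA @` Psi) (kt l) by exact: hkt.
have [P G] := hinv2 hk.
have de : differentiable (gF \o kt) l := differentiable_comp dkd (hgF hk).
have dd := diff_comp dkd (hgF hk).
have e1 := @deriveE _ _ _ kt l 1 dkd.
have ee : eta = gF \o kt by [].
rewrite ee; split; [exact: P | exact: G | exact: de | ].
rewrite dd /comp -e1 Dk linearZ.
by [].
Qed.

Lemma dG1 (l : R) : 0 <= l <= 1 ->
  is_derive l (1:R) (fun x : R => A (eta x)) (dotv (kt l) ('d eta l 1)).
Proof.
move=> hl; have [P G de De] := eta_props hl.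
have [dA hdA] := hA P.
have h := is_derive_comp_diff de dA.
have e : 'd A (eta l) ('d eta l 1) = dotv (kt l) ('d eta l 1).
  by rewrite hdA G.
rewrite e in h.
move: h; apply: is_derive_ext => x.
by [].
Qed.

Lemma dG2 x0 (l : R) : Psi x0 -> 0 <= l <= 1 ->
  is_derive l (1:R) (fun x : R => dotv (gA x0) (eta x)) (dotv (gA x0) ('d eta l 1)).
Proof.
move=> P0 hl; have [P G de De] := eta_props hl.
have [dA hdA] := hA P0.
have cA := diff_continuous dA.
have dL : differentiable ('d A x0) (eta l) := linear_differentiable _ cA.
have h := is_derive_comp_diff de dL.
have e : 'd ('d A x0) (eta l) ('d eta l 1) = dotv (gA x0) ('d eta l 1).
  by rewrite (diff_lin _ cA) hdA.
rewrite e in h; move: h; apply: is_derive_ext => x.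
by rewrite /comp hdA.
Qed.

Let alpha := dotv th a - A th.
Let beta := dotv th' b - A th'.
Let G1 (x : R) := A (eta x).
Let Ga (x : R) := dotv a (eta x).
Let Gb (x : R) := dotv b (eta x).
Let P1 (x : R) := (alpha - Ga x + G1 x) - c * (beta - Gb x + G1 x).

Lemma PhiE (x : R) : Phi K A gA gF th th' x =
  x * (alpha - Ga x + G1 x) + (1 - x) * c * (beta - Gb x + G1 x).
Proof.
rewrite /Phi /KLdiv !dotvBl.
rewrite [dotv (gF _) (gA th)]dotvC [dotv (gF _) (gA th')]dotvC.
rewrite /alpha /beta /Ga /Gb /G1 /eta /kt /a /b /c.
ring.
Qed.

Lemma key_id (l : R) (v : 'rV[R]_d) : s l != 0 ->
  l * dotv a v + (1 - l) * c * dotv b v = s l * dotv (kt l) v.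
Proof.
move=> hs.
have e : s l *: kt l = l *: a + ((1 - l) * c) *: b.
  apply/rowP => j; rewrite /kt /kappa_tilde !mxE -/c.
  by rewrite mulrA mulfV // mul1r.
by rewrite -[RHS]dotvZl e dotvDl !dotvZl.
Qed.

Lemma dPhi (l : R) : 0 <= l <= 1 ->
  is_derive l (1:R) (Phi K A gA gF th th') (P1 l).
Proof.
move=> hl.
have hs : s l != 0 by rewrite gt_eqF // s_pos.
have h1 := dG1 hl; have ha := dG2 hth hl; have hb := dG2 hth' hl.
set de := 'd eta l 1 in h1 ha hb.
have hL1 := is_deriveD (is_deriveB (is_derive_cst alpha l 1) ha) h1.
have hL2 := is_deriveD (is_deriveB (is_derive_cst beta l 1) hb) h1.
have hx := is_derive_aff 0 1 l.
have hy := is_derive_aff c (- c) l.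
have h := is_deriveD (is_deriveM hx hL1) (is_deriveM hy hL2).
have key := key_id de hs.
have e : P1 l = (0 + 1 * l) *: (0 - dotv a de + dotv (kt l) de) +
    (alpha - Ga l + G1 l) *: 1 +
    ((c + - c * l) *: (0 - dotv b de + dotv (kt l) de) +
    (beta - Gb l + G1 l) *: - c).
  rewrite /GRing.scale /= /P1.
  apply/eqP; rewrite -subr_eq0; apply/eqP.
  transitivity (l * dotv a de + (1 - l) * c * dotv b de - s l * dotv (kt l) de).
    rewrite /s; ring.
  by rewrite key subrr.
rewrite e; move: h; apply: is_derive_ext => x.
rewrite PhiE.
change (((0 + 1*x) * (alpha - Ga x + G1 x)) + ((c + - c*x) * (beta - Gb x + G1 x)) = x * (alpha - Ga x + G1 x) + (1 - x) * c * (beta - Gb x + G1 x)).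
ring.
Qed.

Lemma vid (l : R) : s l != 0 ->
  (1 - c) *: kt l - a + c *: b = (- (c / s l)) *: (a - b).
Proof.
move=> hs; apply/rowP => j; rewrite /kt /kappa_tilde !mxE -/c.
move: hs; rewrite /s => hs.
by field.
Qed.

Let P2 (l : R) := - (c / s l) * (c / s l ^+ 2) * dotv (a - b) (w l).

Lemma dP1 (l : R) : 0 <= l <= 1 -> is_derive l (1:R) P1 (P2 l).
Proof.
move=> hl.
have hs : s l != 0 by rewrite gt_eqF // s_pos.
have [P G de De] := eta_props hl.
have h1 := dG1 hl; have ha := dG2 hth hl; have hb := dG2 hth' hl.
set dd := 'd eta l 1 in h1 ha hb De.
have hL1 := is_deriveD (is_deriveB (is_derive_cst alpha l 1) ha) h1.
have hL2 := is_deriveD (is_deriveB (is_derive_cst beta l 1) hb) h1.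
have h := is_deriveB hL1 (is_deriveZ c hL2).
have e : P2 l = (0 - dotv a dd + dotv (kt l) dd) - c *: (0 - dotv b dd + dotv (kt l) dd).
  have e2 : (0 - dotv a dd + dotv (kt l) dd) - c *: (0 - dotv b dd + dotv (kt l) dd)
     = dotv ((1 - c) *: kt l - a + c *: b) dd.
    rewrite /GRing.scale /= !dotvDl ?dotvNl !dotvZl; ring.
  by rewrite e2 vid // De dotvZl dotvZr /P2; ring.
rewrite e; move: h; apply: is_derive_ext => x.
by [].
Qed.

Lemma w_pos (l : R) : 0 < l < 1 -> 0 < dotv (a - b) (w l).
Proof.
move=> hl.
have hl' : 0 <= l <= 1 by case/andP: hl => h0 h1; rewrite !ltW.
have hs : s l != 0 by rewrite gt_eqF // s_pos.
have [P G de De] := eta_props hl'.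
have [dk Dk] := dkt hs.
have dg := hgA P.
have h := is_derive_comp_diff de dg.
have hn : \forall x \near l, (gA \o eta) x = kt x.
  have hin : l \in `]0, 1[ by rewrite in_itv.
  apply: filterS (near_in_itvoo hin) => x; rewrite in_itv => /andP[x0 x1].
  have hx : 0 <= x <= 1 by rewrite !ltW.
  exact: (hinv2 (hkt hx)).2.
have e := @near_eq_derive _ _ _ (gA \o eta) kt l 1 hn.
rewrite (derive_val (is_derive := h)) Dk De linearZ in e.
have ew : 'd gA (eta l) (w l) = a - b.
  apply: (scalerI (a := c / s l ^+ 2)) => //.
  have /andP[c0 _] := c_bounds.
  by rewrite mulf_neq0 ?gt_eqF ?invr_gt0 ?exprn_gt0 ?s_pos.
have wn : w l != 0.
  apply/negP => /eqP w0.
  by move: ew a_neq_b; rewrite w0 linear0 => <-; rewrite eqxx.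
have := hpos P wn.
by rewrite ew dotvC.
Qed.

Let Phi0 := Phi K A gA gF th th'.

Lemma P2_neg (l : R) : 0 < l < 1 -> P2 l < 0.
Proof.
move=> hl; have hl' : 0 <= l <= 1 by case/andP: hl => h0 h1; rewrite !ltW.
have sp := s_pos hl'; have /andP[c0 _] := c_bounds; have wp := w_pos hl.
rewrite /P2 mulNr mulNr oppr_lt0.
apply: mulr_gt0; [apply: mulr_gt0 | exact: wp]; apply: divr_gt0 => //; exact: exprn_gt0.
Qed.

Lemma near_P1 (l : R) : 0 < l < 1 -> \forall x \near l, P1 x = derive1 Phi0 x.
Proof.
move=> hl.
have hin : l \in `]0, 1[ by rewrite in_itv.
apply: filterS (near_in_itvoo hin) => x; rewrite in_itv => /andP[x0 x1].
have hx : 0 <= x <= 1 by rewrite !ltW.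
by rewrite derive1E (derive_val (is_derive := dPhi hx)).
Qed.

Lemma part1 (l : R) : 0 < l < 1 ->
  derivable Phi0 l 1 /\ derivable (derive1 Phi0) l 1 /\ derive1 (derive1 Phi0) l < 0.
Proof.
move=> hl; have hl' : 0 <= l <= 1 by case/andP: hl => h0 h1; rewrite !ltW.
have hn := near_P1 hl.
have dP := dP1 hl'.
split; first exact: (ex_derive (is_derive := dPhi hl')).
split; first exact: (near_eq_derivable hn (ex_derive (is_derive := dP))).
rewrite derive1E -(near_eq_derive _ hn) (derive_val (is_derive := dP)).
exact: P2_neg.
Qed.

Lemma P1_decr (u v : R) : 0 < u -> u < v -> v < 1 -> P1 v < P1 u.
Proof.
move=> u0 uv v1.
have hd : forall x, x \in `]u, v[ -> is_derive x (1:R) P1 (P2 x).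
  move=> x; rewrite in_itv => /andP[ux xv]; apply: dP1.
  by rewrite !ltW // ?(lt_trans u0 ux) ?(lt_trans xv v1).
have hc : {within `[u, v], continuous P1}.
  apply: derivable_within_continuous => x; rewrite in_itv => /andP[ux xv].
  have hx : 0 <= x <= 1 by rewrite (ltW (lt_le_trans u0 ux)) (ltW (le_lt_trans xv v1)).
  exact: (ex_derive (is_derive := dP1 hx)).
have [z hz e] := MVT uv hd hc.
move: hz; rewrite in_itv => /andP[uz zv].
have : P2 z < 0 by apply: P2_neg; rewrite (lt_trans u0 uz) (lt_trans zv v1).
have : 0 < v - u by rewrite subr_gt0.
move=> h1 h2.
have : P2 z * (v - u) < 0 by rewrite pmulr_llt0.
by rewrite -e subr_lt0.
Qed.

Lemma mvt_Phi (x y : R) : 0 <= x -> x < y -> y <= 1 ->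
  exists2 z, x < z < y & Phi0 y - Phi0 x = P1 z * (y - x).
Proof.
move=> x0 xy y1.
have hd : forall z, z \in `]x, y[ -> is_derive z (1:R) Phi0 (P1 z).
  move=> z; rewrite in_itv => /andP[xz zy]; apply: dPhi.
  by rewrite !ltW // ?(le_lt_trans x0 xz) ?(lt_le_trans zy y1).
have hc : {within `[x, y], continuous Phi0}.
  apply: derivable_within_continuous => z; rewrite in_itv => /andP[xz zy].
  have hz : 0 <= z <= 1 by rewrite (le_trans x0 xz) (le_trans zy y1).
  exact: (ex_derive (is_derive := dPhi hz)).
have [z hz e] := MVT xy hd hc.
by exists z => //; move: hz; rewrite in_itv.
Qed.

Lemma conc_lt (x y t : R) : 0 <= x -> x < y -> y <= 1 -> 0 < t < 1 ->
  t * Phi0 x + (1 - t) * Phi0 y < Phi0 (t * x + (1 - t) * y).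
Proof.
move=> x0 xy y1 /andP[t0 t1].
set z := t * x + (1 - t) * y.
have xz : x < z by rewrite /z; nra.
have zy : z < y by rewrite /z; nra.
have [p /andP[xp pz] e1] := mvt_Phi x0 xz (ltW (lt_le_trans zy y1)).
have [q /andP[zq qy] e2] := mvt_Phi (ltW (le_lt_trans x0 xz)) zy y1.
have hpq : P1 q < P1 p.
  apply: P1_decr; first exact: (le_lt_trans x0 xp).
    exact: (lt_trans pz zq).
  exact: (lt_le_trans qy y1).
have hp : 0 < t * (1 - t) * (y - x) * (P1 p - P1 q).
  by rewrite !mulr_gt0 // subr_gt0.
have ex : Phi0 x = Phi0 z - P1 p * (z - x) by rewrite -e1; ring.
have ey : Phi0 y = Phi0 z + P1 q * (y - z) by rewrite -e2; ring.
have eq : t * Phi0 x + (1 - t) * Phi0 y =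
   Phi0 z - t * (1 - t) * (y - x) * (P1 p - P1 q).
  by rewrite ex ey /z; ring.
rewrite eq; lra.
Qed.

Lemma part2 : strictly_concave_on `[0, 1] Phi0.
Proof.
move=> x y hx hy xy t ht.
move: hx hy; rewrite /= !in_itv /= => /andP[x0 x1] /andP[y0 y1].
case: (ltgtP x y) xy => // [lxy | lyx] _.
  exact: conc_lt.
have ht' : 0 < 1 - t < 1 by case/andP: ht => t0 t1; apply/andP; split; lra.
have := conc_lt y0 lyx x1 ht'.
have -> : 1 - (1 - t) = t by ring.
by rewrite addrC [(1 - t) * y + _]addrC.
Qed.

End Main.


Theorem mainTheorem16 (R : realType) (d K : nat) (Psi : set 'rV[R]_d)
  (A : 'rV[R]_d -> R) (gA gF : 'rV[R]_d -> 'rV[R]_d) (th th' : 'rV[R]_d) :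
  (3 <= K)%N ->
  open Psi -> convex_setv Psi ->
  (* A is C^2 on Psi with gradient gA and positive definite Hessian 'd gA *)
  (forall x, Psi x -> differentiable A x /\ forall v, 'd A x v = dotv (gA x) v) ->
  (forall x, Psi x -> differentiable gA x) ->
  (forall v, {within Psi, continuous (fun x => 'd gA x v)}) ->
  (forall x v, Psi x -> v != 0 -> 0 < dotv v ('d gA x v)) ->
  strictly_convex_on Psi A ->
  (* gradF is the inverse of gradA, and F is C^2 on the mean-parameter set *)
  (forall x, Psi x -> gF (gA x) = x) ->
  (forall k, (gA @` Psi) k -> Psi (gF k) /\ gA (gF k) = k) ->
  (forall k, (gA @` Psi) k -> differentiable gF k) ->
  (forall v, {within gA @` Psi, continuous (fun k => 'd gF k v)}) ->
  Psi th -> Psi th' -> th != th' ->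
  (* kappa~(lambda) lies where gradF maps into Psi *)
  (forall l : R, 0 <= l <= 1 -> (gA @` Psi) (kappa_tilde K (gA th) (gA th') l)) ->
  (forall l : R, 0 < l < 1 ->
     derivable (Phi K A gA gF th th') l 1 /\
     derivable (derive1 (Phi K A gA gF th th')) l 1 /\
     derive1 (derive1 (Phi K A gA gF th th')) l < 0) /\
  strictly_concave_on `[0, 1] (Phi K A gA gF th th').
Proof.
move=> hK _ _ hA hgA _ hpos _ hinv1 hinv2 hgF _ hth hth' hne hkt.
split.
  move=> l hl.
  exact: (part1 hK hA hgA hpos hinv1 hinv2 hgF hth hth' hne hkt hl).
exact: (part2 hK hA hgA hpos hinv1 hinv2 hgF hth hth' hne hkt).
Qed.
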